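(* Let $\mathcal P$ be an energy timed path from $s_0$ to $s_n$ and $E$ an energy constraint. Then the energy relation $\mathcal R^E_{\mathcal P}$ is a closed convex subset of $E\times E$ and can be described by a finite conjunction of non-strict linear inequalities with rational coefficients over $(w_0,w_1)$. Consequently, for every $I\in\mathcal I(E)$, both $\mathcal R^E_{\mathcal P}(I)$ and $(\mathcal R^E_{\mathcal P})^{-1}(I)$ belong to $\mathcal I(E)$. The same holds for any finite composition $\mathcal R^E_{\mathcal P_k}\circ\cdots\circ\mathcal R^E_{\mathcal P_1}$ of such energy relations.
   Context: An energy timed automaton (ETA) is a tuple $\langle S,S_0,X,\mathrm{Inv},r,T\rangle$ where $S$ is a finite set of states, $S_0\subseteq S$ the initial states, $X$ a finite set of clocks, $\mathrm{Inv}$ assigns to each state an invariant which is a conjunction of closed (non-strict) clock constraints $x\bowtie c$ with $\bowtie\in\{\le,\ge,=\}$ and $c$ rational, $r\colon S\to\mathbb Q$ assigns an energy rate to each state, and $T$ is a finite set of transitions $(s,g,u,z,s')$ with $g$ a closed clock constraint (guard), $u\in\mathbb Q$ an energy update, and $z\subseteq X$ a set of clocks to reset. Given transitions $t_i=(s_i,g_i,u_i,z_i,s_{i+1})$, $0\le i<n$, a finite run is a sequence of configurations $(\ell_j,v_j,w_j)_{0\le j\le 2n}$ for which there exist delays $d_i\ge 0$ with: $\ell_{2j}=\ell_{2j+1}=s_j$, $\ell_{2n}=s_n$; $v_{2j+1}=v_{2j}+d_j$, $v_{2j+2}=v_{2j+1}[z_j\to0]$; $v_{2j}\models\mathrm{Inv}(s_j)$,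 $v_{2j+1}\models \mathrm{Inv}(s_j)\wedge g_j$; $w_{2j+1}=w_{2j}+d_j\,r(s_j)$, $w_{2j+2}=w_{2j+1}+u_j$. An energy constraint is a closed interval $E$ with rational bounds; a run satisfies $E$ if all its energy levels lie in $E$. $\mathcal I(E)$ is the set of closed subintervals of $E$ (including $\emptyset$). An energy timed path (ETP) from $s_0$ to $s_n$ is an ETA with states $s_0,\dots,s_n$, initial state $s_0$, and exactly one transition from $s_i$ to $s_{i+1}$ for each $i<n$. The energy relation $\mathcal R^E_{\mathcal P}(w_0,w_1)$ holds iff there is a finite run of $\mathcal P$ from $(s_0,\mathbf 0,w_0)$ to $(s_n,\mathbf 0,w_1)$ satisfying $E$. For $I\in\mathcal I(E)$: $\mathcal R(I)=\{w_1\in E\mid\exists w_0\in I.\ \mathcal R(w_0,w_1)\}$, $\mathcal R^{-1}(I)=\{w_0\in E\mid \exists w_1\in I.\ \mathcal R(w_0,w_1)\}$. *)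

(* Defs.v *)
From HB Require Import structures.
From mathcomp Require Import all_boot all_order all_algebra.
Set Implicit Arguments. Unset Strict Implicit. Unset Printing Implicit Defensive.
Import Order.TTheory GRing.Theory Num.Theory.
Local Open Scope ring_scope.

Inductive cmp := CLe | CGe | CEq.

Record atom (m : nat) := Atom { at_clock : 'I_m; at_op : cmp; at_const : rat }.

Definition constr (m : nat) := seq (atom m).

Section Sem.
Variable R : realFieldType.
Variable m : nat.

Definition valuation := 'I_m -> R.

Definition sat_atom (v : valuation) (a : atom m) : bool :=
  match at_op a with
  | CLe => v (at_clock a) <= ratr (at_const a)
  | CGe => ratr (at_const a) <= v (at_clock a)
  | CEq => v (at_clock a) == ratr (at_const a)
  end.

Definition sat (v : valuation) (g : constr m) : bool := all (sat_atom v) g.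

Definition delay (v : valuation) (d : R) : valuation := fun x => v x + d.

Definition reset (z : {set 'I_m}) (v : valuation) : valuation :=
  fun x => if x \in z then 0 else v x.
End Sem.

(* An energy timed path s_0 -> ... -> s_n over the clock set 'I_m.
   etp_inv i, etp_rate i : invariant and rate of state s_i (i <= n);
   etp_guard i, etp_upd i, etp_reset i : guard, update and reset set of the
   unique transition s_i -> s_{i+1} (i < n). Values at other indices are
   irrelevant. *)
Record etp (m : nat) := ETP {
  etp_len : nat;
  etp_inv : nat -> constr m;
  etp_rate : nat -> rat;
  etp_guard : nat -> constr m;
  etp_upd : nat -> rat;
  etp_reset : nat -> {set 'I_m} }.

Section Runs.
Variable R : realFieldType.

Definition inE (lo hi : rat) (w : R) : bool := (ratr lo <= w) && (w <= ratr hi).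

Variables (m : nat) (P : etp m).

(* v_{2j}: valuation on entering state s_j, given the delays d *)
Fixpoint run_val (d : nat -> R) (j : nat) : valuation R m :=
  match j with
  | 0 => fun _ => 0
  | j'.+1 => reset (etp_reset P j') (delay (run_val d j') (d j'))
  end.

(* w_{2j}: energy on entering state s_j, given w_0 and the delays d *)
Fixpoint run_en (w0 : R) (d : nat -> R) (j : nat) : R :=
  match j with
  | 0 => w0
  | j'.+1 => run_en w0 d j' + d j' * ratr (etp_rate P j') + ratr (etp_upd P j')
  end.

Definition run_ok (lo hi : rat) (d : nat -> R) (w0 w1 : R) : Prop :=
  let n := etp_len P in
  (forall j, (j < n)%N ->
     0 <= d j /\
     sat (run_val d j) (etp_inv P j) /\
     sat (delay (run_val d j) (d j)) (etp_inv P j) /\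
     sat (delay (run_val d j) (d j)) (etp_guard P j) /\
     inE lo hi (run_en w0 d j) /\
     inE lo hi (run_en w0 d j + d j * ratr (etp_rate P j)))
  /\ inE lo hi (run_en w0 d n)
  /\ (forall x, run_val d n x = 0)
  /\ run_en w0 d n = w1.

Definition energy_rel (lo hi : rat) (w0 w1 : R) : Prop :=
  exists d : nat -> R, run_ok lo hi d w0 w1.
End Runs.

(* composition R_{P_k} o ... o R_{P_1} for the list [:: P_1; ...; P_k]
   (each path may have its own set of clocks) *)
Fixpoint comp_rel (R : realFieldType) (lo hi : rat) (ps : seq {m : nat & etp m})
  : R -> R -> Prop :=
  match ps with
  | [::] => fun w0 w1 => w0 = w1
  | p :: ps' => fun w0 w2 =>
      exists w1, energy_rel (projT2 p) lo hi w0 w1 /\ comp_rel lo hi ps' w1 w2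
  end.

Definition is_subint (R : realFieldType) (lo hi : rat) (S : R -> Prop) : Prop :=
  (forall x, ~ S x) \/
  exists a b : R, [/\ a <= b, ratr lo <= a, b <= ratr hi &
                      forall x, S x <-> a <= x <= b].

Definition rel_image (R : realFieldType) (lo hi : rat) (Rel : R -> R -> Prop)
  (I : R -> Prop) : R -> Prop :=
  fun w1 => inE lo hi w1 /\ exists w0, I w0 /\ Rel w0 w1.
Definition rel_preimage (R : realFieldType) (lo hi : rat) (Rel : R -> R -> Prop)
  (I : R -> Prop) : R -> Prop :=
  fun w0 => inE lo hi w0 /\ exists w1, I w1 /\ Rel w0 w1.

Definition energy_rel_props (R : realFieldType) (lo hi : rat)
  (Rel : R -> R -> Prop) : Prop :=
  [/\ (forall w0 w1, Rel w0 w1 -> inE lo hi w0 /\ inE lo hi w1),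
      (forall w0 w1 w0' w1' (t : R), 0 <= t <= 1 -> Rel w0 w1 -> Rel w0' w1' ->
          Rel (t * w0 + (1 - t) * w0') (t * w1 + (1 - t) * w1')),
      (exists cs : seq (rat * rat * rat), forall w0 w1,
          Rel w0 w1 <->
          all (fun t => ratr t.1.1 * w0 + ratr t.1.2 * w1 <= ratr t.2) cs)
    & (forall I : R -> Prop, is_subint lo hi I ->
          is_subint lo hi (rel_image lo hi Rel I) /\
          is_subint lo hi (rel_preimage lo hi Rel I))].

(* Main.v *)
Require Import Defs.
From HB Require Import structures.
From mathcomp Require Import all_boot all_order all_algebra.
From mathcomp Require Import ring lra zify.
Set Implicit Arguments. Unset Strict Implicit. Unset Printing Implicit Defensive.
Import Order.TTheory GRing.Theory Num.Theory.
Local Open Scope ring_scope.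

Section FM.
Variable R : realFieldType.

Definition form := nat -> rat.
Definition cns := (form * rat)%type.

Definition eval (N : nat) (c : form) (x : nat -> R) : R :=
  \sum_(i < N) ratr (c i) * x i.
Definition holds N (k : cns) x := eval N k.1 x <= ratr k.2.
Definition allh N (cs : seq cns) x := all (fun k => holds N k x) cs.
Definition upd (x : nat -> R) (j : nat) (t : R) : nat -> R :=
  fun i => if i == j then t else x i.
Definition fadd (f g : form) : form := fun i => f i + g i.
Definition fscale (a : rat) (f : form) : form := fun i => a * f i.
Definition fzero : form := fun _ => 0.
Definition e (k : nat) : form := fun i => if i == k then 1 else 0.

Lemma eval_0 c x : eval 0 c x = 0.
Proof. by rewrite /eval big_ord0. Qed.

Lemma eval_S N c x : eval N.+1 c x = eval N c x + ratr (c N) * x N.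
Proof. by rewrite /eval big_ord_recr. Qed.

Lemma eval_ext N c x y : (forall i, (i < N)%N -> x i = y i) ->
  eval N c x = eval N c y.
Proof. move=> H; apply: eq_bigr => i _; by rewrite H. Qed.

Lemma allh_ext N cs x y : (forall i, (i < N)%N -> x i = y i) ->
  allh N cs x = allh N cs y.
Proof. move=> H; apply: eq_all => k; by rewrite /holds (eval_ext _ H). Qed.

Lemma allh_cat N s1 s2 x : allh N (s1 ++ s2) x = allh N s1 x && allh N s2 x.
Proof. by rewrite /allh all_cat. Qed.

Lemma eval_add N f g x : eval N (fadd f g) x = eval N f x + eval N g x.
Proof.
rewrite /eval -big_split; apply: eq_bigr => i _.
by rewrite /fadd rmorphD mulrDl.
Qed.

Lemma eval_scale N a f x : eval N (fscale a f) x = ratr a * eval N f x.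
Proof.
rewrite /eval mulr_sumr; apply: eq_bigr => i _.
by rewrite /fscale rmorphM mulrA.
Qed.

Lemma eval_zero N x : eval N fzero x = 0.
Proof. rewrite /eval big1 // => i _; by rewrite /fzero rmorph0 mul0r. Qed.

Lemma eval_e N k x : eval N (e k) x = if (k < N)%N then x k else 0.
Proof.
elim: N => [|N IH]; first by rewrite eval_0.
rewrite eval_S IH /e ltnS.
case: (ltngtP k N) => [H|H|->] /=; rewrite ?rmorph0 ?rmorph1 ?mul0r ?addr0 ?mul1r ?add0r //.
Qed.

Lemma eval_split N c x j : (j < N)%N ->
  eval N c x = eval N c (upd x j 0) + ratr (c j) * x j.
Proof.
elim: N => [//|N IH]; rewrite ltnS leq_eqVlt => /orP[/eqP ->|H].
- rewrite !eval_S /upd eqxx mulr0 addr0; congr (_ + _).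
  by apply: eval_ext => i Hi; rewrite (ltn_eqF Hi).
- rewrite !eval_S (IH H) /upd (gtn_eqF H); rewrite -addrA (addrC (_ * x j)) addrA.
  done.
Qed.

Lemma eval_upd N c x j t : (j < N)%N ->
  eval N c (upd x j t) = eval N c (upd x j 0) + ratr (c j) * t.
Proof.
move=> Hj; rewrite (eval_split _ _ Hj) /upd eqxx; congr (_ + _).
apply: eval_ext => i _; by case: eqP.
Qed.

Definition comb (a1 : rat) (k1 : cns) (a2 : rat) (k2 : cns) : cns :=
  (fadd (fscale a1 k1.1) (fscale a2 k2.1), a1 * k1.2 + a2 * k2.2).

Fixpoint combos (j : nat) (P Q : seq cns) : seq cns :=
  match P with
  | [::] => [::]
  | k1 :: P' => map (fun k2 => comb (- k2.1 j) k1 (k1.1 j) k2) Q ++ combos j P' Q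
  end.

Definition FM j (cs : seq cns) : seq cns :=
  [seq k <- cs | k.1 j == 0] ++
  combos j [seq k <- cs | 0 < k.1 j] [seq k <- cs | k.1 j < 0].

Lemma all_combos (h : pred cns) j P Q :
  all h (combos j P Q) =
  all (fun k1 => all (fun k2 => h (comb (- k2.1 j) k1 (k1.1 j) k2)) Q) P.
Proof. elim: P => //= k1 P IH; by rewrite all_cat all_map IH. Qed.

Lemma low_exists (T : Type) (B : seq T) (g : T -> R) :
  exists t, all (fun b => t <= g b) B.
Proof.
elim: B => [|b B [t Ht]]; first by exists 0.
exists (Num.min (g b) t) => /=; rewrite ge_min lexx /=.
by apply: sub_all Ht => b' H; rewrite ge_min H orbT.
Qed.

Lemma ex_between (T : Type) (A B : seq T) (f g : T -> R) :
  all (fun a => all (fun b => f a <= g b) B) A ->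
  exists t, all (fun a => f a <= t) A && all (fun b => t <= g b) B.
Proof.
elim: A => [|a A IH] /=; first by move=> _; apply: low_exists.
move=> /andP[Ha /IH [t /andP[HA HB]]].
exists (Num.max (f a) t); rewrite le_max lexx /=.
apply/andP; split.
- by apply: sub_all HA => a' H; rewrite le_max H orbT.
- have : all (fun b => (f a <= g b) && (t <= g b)) B.
    by rewrite all_predI Ha HB.
  by apply: sub_all => b; rewrite ge_max.
Qed.

Lemma all3 (T : Type) (p q r : pred T) s :
  all p s -> all q s -> all r s -> all (fun x => [&& p x, q x & r x]) s.
Proof. elim: s => //= x s IH /andP[-> H1] /andP[-> H2] /andP[-> H3] /=; exact: IH. Qed.

Lemma all_pairs (T : Type) (P : pred T) (Q : T -> T -> bool) s :
  all P s -> (forall k1 k2, P k1 -> P k2 -> Q k1 k2) ->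
  all (fun k1 => all (Q k1) s) s.
Proof.
move=> H HQ; have H' := H; apply: sub_all H' => k1 Hk1.
by apply: sub_all H => k2 Hk2; apply: HQ.
Qed.

Lemma FM_correct N j cs x : (j < N)%N ->
  (exists t, allh N cs (upd x j t)) <-> allh N (FM j cs) x.
Proof.
move=> Hj.
pose rr (k : cns) := eval N k.1 (upd x j 0).
have H1 : forall k t, holds N k (upd x j t) = (rr k + ratr (k.1 j) * t <= ratr k.2).
  by move=> k t; rewrite /holds eval_upd.
have H2 : forall k, holds N k x = (rr k + ratr (k.1 j) * x j <= ratr k.2).
  by move=> k; rewrite /holds (eval_split _ _ Hj).
have Hc : forall k1 k2, holds N (comb (- k2.1 j) k1 (k1.1 j) k2) x =
   (- ratr (k2.1 j) * rr k1 + ratr (k1.1 j) * rr k2 <=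
    - ratr (k2.1 j) * ratr k1.2 + ratr (k1.1 j) * ratr k2.2).
  move=> k1 k2; rewrite H2 /rr /comb /= eval_add !eval_scale.
  rewrite /fadd /fscale mulNr [k1.1 j * _]mulrC addNr rmorph0 mul0r addr0.
  by rewrite !rmorphD !rmorphM !rmorphN.
rewrite /allh /FM all_cat all_filter all_combos all_filter.
split.
- move=> [t Ht]; apply/andP; split.
  + apply: sub_all Ht => k /=; rewrite H1 H2.
    by case: eqP => //= ->; rewrite rmorph0 !mul0r.
  + have Ht' := Ht; apply: sub_all Ht' => k1 Hk1; apply/implyP => Hp.
    rewrite all_filter; apply: sub_all Ht => k2 Hk2 /=; apply/implyP => Hn.
    move: Hk1 Hk2; rewrite Hc !H1.
    have Hp' : 0 < ratr (k1.1 j) :> R by rewrite ltr0q.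
    have Hn' : ratr (k2.1 j) < 0 :> R.
      by rewrite -oppr_gt0 -rmorphN ltr0q oppr_gt0.
    move: Hp' Hn'; set a1 := ratr (k1.1 j); set a2 := ratr (k2.1 j).
    move=> Hp' Hn' Hk1' Hk2'; nra.
- move=> /andP[Hz Hcc].
  pose f (k : cns) := (ratr k.2 - rr k) / ratr (k.1 j).
  have [t /andP[HA HB]] :
    exists t, all (fun k => f k <= t) [seq k <- cs | k.1 j < 0] &&
              all (fun k => t <= f k) [seq k <- cs | 0 < k.1 j].
    apply: ex_between.
    have Hcc2 : allrel (fun k1 k2 => (0 < k1.1 j) ==> (k2.1 j < 0) ==>
                   holds N (comb (- k2.1 j) k1 (k1.1 j) k2) x) cs cs.
      apply: sub_all Hcc => k1 /=; case: (0 < k1.1 j) => /= H.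
      + by rewrite all_filter in H.
      + by apply: sub_all Hz.
    rewrite allrelC in Hcc2; rewrite all_filter.
    apply: sub_all Hcc2 => k2 /= G2; apply/implyP => Hn; rewrite all_filter.
    apply: sub_all G2 => k1 /= H; apply/implyP => Hp.
    move: H; rewrite Hp Hn /= Hc => H.
    have Hp' : 0 < ratr (k1.1 j) :> R by rewrite ltr0q.
    have Hn' : ratr (k2.1 j) < 0 :> R.
      by rewrite -oppr_gt0 -rmorphN ltr0q oppr_gt0.
    have e1 : f k1 * ratr (k1.1 j) = ratr k1.2 - rr k1.
      by rewrite /f divfK // gt_eqF.
    have e2 : f k2 * ratr (k2.1 j) = ratr k2.2 - rr k2.
      by rewrite /f divfK // lt_eqF.
    move: e1 e2 Hp' Hn' H; set a1 := ratr (k1.1 j); set a2 := ratr (k2.1 j).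
    set u1 := f k1; set u2 := f k2 => e1 e2 Hp' Hn' H.
    have key : a1 * - a2 * (u1 - u2) = - a2 * (u1 * a1) + a1 * (u2 * a2) by ring.
    rewrite e1 e2 in key.
    have hp : 0 < a1 * - a2 by rewrite mulr_gt0 // oppr_gt0.
    have : 0 <= a1 * - a2 * (u1 - u2) by rewrite key; lra.
    by rewrite pmulr_rge0 // subr_ge0.
  rewrite all_filter in HA; rewrite all_filter in HB.
  exists t; apply: sub_all (all3 Hz HA HB) => k /and3P[hz ha hb]; rewrite H1.
  move: hz ha hb; case: (ltrgtP (k.1 j) 0) => Hs /= hz ha hb.
  + have Hn' : ratr (k.1 j) < 0 :> R.
      by rewrite -oppr_gt0 -rmorphN ltr0q oppr_gt0.
    move/implyP: ha => /(_ Hs); rewrite /f ler_ndivrMr // mulrC => ha; lra.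
  + have Hp' : 0 < ratr (k.1 j) :> R by rewrite ltr0q.
    move/implyP: hb => /(_ Hs); rewrite /f ler_pdivlMr // mulrC => hb; lra.
  + move/implyP: hz => /(_ _); rewrite Hs eqxx => /(_ isT).
    by rewrite H2 Hs rmorph0 !mul0r.
Qed.


Lemma elim_gen N K (C : seq cns) k : (K + k <= N)%N -> exists C', forall x,
  (exists y, (forall i, (i < N)%N -> ~~ (K <= i < K + k)%N -> y i = x i) /\ allh N C y)
  <-> allh N C' x.
Proof.
elim: k => [|k IH] Hk.
  exists C => x; split.
  - move=> [y [Hy HC]]; rewrite -(@allh_ext N C y x) // => i Hi.
    apply: Hy => //; lia.
  - move=> HC; by exists x.
have Hj : (K + k < N)%N by move: Hk; rewrite addnS.
have [C1 HC1] := IH (ltnW Hj).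
exists (FM (K + k) C1) => x; rewrite -(FM_correct _ _ Hj); split.
- move=> [y [Hy HC]]; exists (y (K + k)); apply/HC1; exists y; split => // i Hi Hn.
  rewrite /upd; case: eqP => [->//|ne]; apply: Hy => //; lia.
- move=> [t /HC1 [y [Hy HC]]]; exists y; split => // i Hi Hn.
  rewrite Hy //; last by lia.
  by rewrite /upd; case: eqP => // E; lia.
Qed.

Lemma elim_tail N K (C : seq cns) : (K <= N)%N -> exists C', forall x,
  (exists y, (forall i, (i < K)%N -> y i = x i) /\ allh N C y) <-> allh N C' x.
Proof.
move=> HK; have HK' : (K + (N - K) <= N)%N by rewrite subnKC.
have [C' HC'] := @elim_gen N K C (N - K) HK'.
exists C' => x; rewrite -HC'; split.
- move=> [y [Hy HC]]; exists y; split => // i Hi Hn; apply: Hy; lia.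
- move=> [y [Hy HC]]; exists y; split => // i Hi; apply: Hy; lia.
Qed.

Lemma eval_trunc K N c x : (K <= N)%N -> (forall i, (K <= i)%N -> x i = 0) ->
  eval N c x = eval K c x.
Proof.
move=> + Hx; elim: N => [|N IH]; first by rewrite leqn0 => /eqP ->.
rewrite leq_eqVlt => /orP[/eqP -> //|]; rewrite ltnS => H.
by rewrite eval_S IH // Hx // mulr0 addr0.
Qed.

Definition poly2 (Rel : R -> R -> Prop) := exists cs : seq (rat * rat * rat),
  forall w0 w1, Rel w0 w1 <->
    all (fun t => ratr t.1.1 * w0 + ratr t.1.2 * w1 <= ratr t.2) cs.

Lemma readoff2 N C' (x : nat -> R) : (2 <= N)%N -> (forall i, (2 <= i)%N -> x i = 0) ->
  allh N C' x = all (fun t => ratr t.1.1 * x 0 + ratr t.1.2 * x 1 <= ratr t.2)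
                  (map (fun k : cns => (k.1 0, k.1 1, k.2)) C').
Proof.
move=> HN Hx; rewrite all_map; apply: eq_all => k /=.
by rewrite /holds (eval_trunc _ HN Hx) !eval_S eval_0 add0r.
Qed.

Lemma holds2 N i j a b c (y : nat -> R) : (i < N)%N -> (j < N)%N ->
  holds N (fadd (fscale a (e i)) (fscale b (e j)), c) y =
  (ratr a * y i + ratr b * y j <= ratr c).
Proof. by move=> Hi Hj; rewrite /holds /= eval_add !eval_scale !eval_e Hi Hj. Qed.

Lemma poly2_comp Rel1 Rel2 : poly2 Rel1 -> poly2 Rel2 ->
  poly2 (fun w0 w2 => exists w1, Rel1 w0 w1 /\ Rel2 w1 w2).
Proof.
move=> [cs1 H1] [cs2 H2].
pose C := map (fun t : rat * rat * rat => (fadd (fscale t.1.1 (e 0)) (fscale t.1.2 (e 2)), t.2)) cs1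
       ++ map (fun t : rat * rat * rat => (fadd (fscale t.1.1 (e 2)) (fscale t.1.2 (e 1)), t.2)) cs2.
have HC : forall y, allh 3 C y =
   all (fun t => ratr t.1.1 * y 0 + ratr t.1.2 * y 2 <= ratr t.2) cs1 &&
   all (fun t => ratr t.1.1 * y 2 + ratr t.1.2 * y 1 <= ratr t.2) cs2.
  move=> y; rewrite allh_cat /allh !all_map.
  by congr andb; apply: eq_all => t /=; rewrite holds2.
have [C' HC'] := @elim_tail 3 2 C isT.
exists (map (fun k : cns => (k.1 0, k.1 1, k.2)) C') => w0 w2.
pose x := fun i : nat => if i == 0%N then w0 else if i == 1%N then w2 else 0.
rewrite (_ : w0 = x 0) // (_ : w2 = x 1) // -(@readoff2 3 C' x) //; last first.
  by case=> [|[|i]].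
rewrite -HC'; split.
- move=> [w1 [/H1 h1 /H2 h2]]; exists (upd x 2 w1); split; first by case=> [|[|]].
  by rewrite HC /upd /= h1 h2.
- move=> [y [Hy]]; rewrite HC => /andP[h1 h2]; exists (y 2); split.
  + by apply/H1; rewrite -(Hy 0%N) // -(Hy 1%N).
  + by apply/H2; rewrite -(Hy 1%N).
Qed.


Definition Alow (s : R) (L : seq (R * R)) :=
  foldr (fun p acc => if p.1 < 0 then Num.max (p.2 / p.1) acc else acc) s L.
Definition Bup (s : R) (L : seq (R * R)) :=
  foldr (fun p acc => if 0 < p.1 then Num.min (p.2 / p.1) acc else acc) s L.
Definition okL (L : seq (R * R)) := all (fun p => (p.1 != 0) || (0 <= p.2)) L.

Lemma key1D L s t w :
  ((s <= w <= t) && all (fun p => p.1 * w <= p.2) L) =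
  okL L && (Alow s L <= w <= Bup t L).
Proof.
elim: L => [|p L IH] /=; first by rewrite andbT.
rewrite andbCA IH.
case: (ltrgtP p.1 0) => H /=.
- rewrite ge_max mulrC -ler_ndivrMr //.
  by case: (p.2 / p.1 <= w); case: (okL L); case: (Alow s L <= w); case: (w <= Bup t L).
- rewrite le_min mulrC -ler_pdivlMr //.
  by case: (w <= p.2 / p.1); case: (okL L); case: (Alow s L <= w); case: (w <= Bup t L).
- rewrite H mul0r.
  by case: (0 <= p.2); case: (okL L); case: (Alow s L <= w); case: (w <= Bup t L).
Qed.

Lemma Alow_ge s L : s <= Alow s L.
Proof. elim: L => [|p L IH] //=; case: ifP => // _; by rewrite le_max IH orbT. Qed.

Lemma Bup_le s L : Bup s L <= s.
Proof. elim: L => [|p L IH] //=; case: ifP => // _; by rewrite ge_min IH orbT. Qed.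

Lemma is_subint_ext lo hi (S T : R -> Prop) :
  (forall x, S x <-> T x) -> is_subint lo hi S -> is_subint lo hi T.
Proof.
move=> H [H0|[a [b [h1 h2 h3 h4]]]].
- by left => x /H /H0.
- right; exists a, b; split => // x; rewrite -H; exact: h4.
Qed.

Lemma subint1D lo hi (L : seq (R * R)) :
  is_subint lo hi (fun w : R => Defs.inE lo hi w /\ all (fun p => p.1 * w <= p.2) L).
Proof.
case E: (okL L && (Alow (ratr lo) L <= Bup (ratr hi) L)).
- move/andP: E => [ok hab]; right; exists (Alow (ratr lo) L), (Bup (ratr hi) L).
  split => //; [exact: Alow_ge | exact: Bup_le |] => x.
  have := key1D L (ratr lo) (ratr hi) x; rewrite /Defs.inE ok /= => Hk.
  split => [[h1 h2]|h]; first by rewrite -Hk h1 h2.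
  by move: Hk; rewrite h => /andP[-> ->].
- left => x [h1 h2]; have := key1D L (ratr lo) (ratr hi) x.
  move: h1; rewrite /Defs.inE => ->; rewrite h2 => /esym /andP[ok /andP[ha hb]].
  by move: E; rewrite ok (le_trans ha hb).
Qed.

Lemma imgL lo hi (cs : seq (rat * rat * rat)) (a b : R) :
  is_subint lo hi (fun u => Defs.inE lo hi u /\ exists v, a <= v <= b /\
     all (fun t => ratr t.1.1 * v + ratr t.1.2 * u <= ratr t.2) cs).
Proof.
pose C := [:: (fadd (fscale 1 (e 1)) (fscale (-1) (e 3)), 0);
              (fadd (fscale 1 (e 3)) (fscale (-1) (e 2)), 0)] ++
          map (fun t : rat * rat * rat => (fadd (fscale t.1.1 (e 3)) (fscale t.1.2 (e 0)), t.2)) cs.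
have HC : forall y, allh 4 C y = [&& y 1 <= y 3, y 3 <= y 2 &
     all (fun t => ratr t.1.1 * y 3 + ratr t.1.2 * y 0 <= ratr t.2) cs].
  move=> y; rewrite allh_cat /allh /= !holds2 // all_map.
  rewrite rmorph1 rmorphN1 rmorph0 !mul1r !mulN1r !subr_le0. rewrite andbT -andbA; congr (_ && (_ && _)).
  by apply: eq_all => t /=; rewrite holds2.
have [C' HC'] := @elim_tail 4 3 C isT.
pose L : seq (R * R) := map (fun k : cns => (ratr (k.1 0), ratr k.2 - ratr (k.1 1) * a - ratr (k.1 2) * b)) C'.
apply: (is_subint_ext _ (subint1D lo hi L)) => u.
pose x := fun i : nat => if i == 0%N then u else if i == 1%N then a
            else if i == 2%N then b else 0.
have -> : all (fun p => p.1 * u <= p.2) L = allh 4 C' x.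
  rewrite /L all_map; apply: eq_all => k /=.
  rewrite /holds (@eval_trunc 3 4) //; last by case=> [|[|[|]]].
  rewrite !eval_S eval_0 /x /= add0r; apply/idP/idP => h; lra.
rewrite -HC'; split => [[hu [y [Hy HCy]]]|[hu [v [hv hall]]]]; split => //.
- move: HCy; rewrite HC => /and3P[h1 h2 h3]; exists (y 3); split.
  + by move: h1 h2; rewrite (Hy 1%N) // (Hy 2%N) // => -> ->.
  + by rewrite -[u](Hy 0%N).
- exists (upd x 3 v); split; first by case=> [|[|[|]]].
  by rewrite HC /upd /=; move/andP: hv => [-> ->].
Qed.

Lemma props_of lo hi (Rel : R -> R -> Prop) :
  (forall w0 w1, Rel w0 w1 -> Defs.inE lo hi w0 /\ Defs.inE lo hi w1) -> poly2 Rel ->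
  energy_rel_props lo hi Rel.
Proof.
move=> Hsub [cs Hcs]; split => //; last 1 first.
- move=> I [HI|[a [b [hab hlo hhi HI]]]].
  + by split; left => w [_ [w' [h _]]]; exact: HI h.
  + split.
    * apply: (is_subint_ext _ (imgL lo hi cs a b)) => u.
      split => [[hu [v [hv hall]]]|[hu [v [hv hR]]]]; split => //; exists v.
      - by split; [apply/HI | apply/Hcs].
      - by split; [apply/HI | apply/Hcs].
    * apply: (is_subint_ext _
        (imgL lo hi (map (fun t : rat * rat * rat => (t.1.2, t.1.1, t.2)) cs) a b)) => u.
      split => [[hu [v [hv hall]]]|[hu [v [hv hR]]]]; split => //; exists v.
      - split; [apply/HI | apply/Hcs] => //; move: hall; rewrite all_map.
        by apply: sub_all => t /=; rewrite addrC.
      - split; [apply/HI | ] => //; move/Hcs: hR; rewrite all_map.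
        by apply: sub_all => t /=; rewrite addrC.
- move=> w0 w1 w0' w1' t /andP[t0 t1] /Hcs h /Hcs h'; apply/Hcs.
  have : all (fun u => (ratr u.1.1 * w0 + ratr u.1.2 * w1 <= ratr u.2) &&
                       (ratr u.1.1 * w0' + ratr u.1.2 * w1' <= ratr u.2)) cs.
    by rewrite all_predI h h'.
  apply: sub_all => -[[p q] c] /andP /= [hp hq].
  set P := ratr p; set Q := ratr q; set Cc := ratr c.
  have -> : P * (t * w0 + (1 - t) * w0') + Q * (t * w1 + (1 - t) * w1') =
     t * (P * w0 + Q * w1) + (1 - t) * (P * w0' + Q * w1') by ring.
  have h1 : t * (P * w0 + Q * w1) <= t * Cc by rewrite ler_wpM2l.
  have h2 : (1 - t) * (P * w0' + Q * w1') <= (1 - t) * Cc.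
    by rewrite ler_wpM2l // subr_ge0.
  have -> : Cc = t * Cc + (1 - t) * Cc by ring.
  exact: lerD.
- by exists cs.
Qed.

End FM.

Section Energy.
Variables (R : realFieldType) (m : nat) (P : etp m) (lo hi : rat).

Definition NN := (etp_len P).+2.

Fixpoint valF (j : nat) (c : 'I_m) : form :=
  match j with
  | 0 => fzero
  | j'.+1 => if c \in etp_reset P j' then fzero else fadd (valF j' c) (e j'.+2)
  end.

Fixpoint enF (j : nat) : form * rat :=
  match j with
  | 0 => (e 0, 0)
  | j'.+1 => (fadd (enF j').1 (fscale (etp_rate P j') (e j'.+2)), (enF j').2 + etp_upd P j')
  end.

Definition aeval (a : form * rat) (x : nat -> R) := eval NN a.1 x + ratr a.2.

Definition mkx (w0 w1 : R) (d : nat -> R) : nat -> R :=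
  fun i => match i with 0 => w0 | 1 => w1 | i'.+2 => d i' end.

Lemma lt_NN j : (j < etp_len P)%N -> (j.+2 < NN)%N.
Proof. by rewrite /NN !ltnS. Qed.

Lemma valF_ok w0 w1 d j c : (j <= etp_len P)%N ->
  run_val P d j c = eval NN (valF j c) (mkx w0 w1 d).
Proof.
elim: j => [|j IH] Hj /=; first by rewrite eval_zero.
rewrite /reset /delay; case: (c \in _); first by rewrite eval_zero.
by rewrite eval_add eval_e lt_NN // IH // ltnW.
Qed.

Lemma enF_ok w0 w1 d j : (j <= etp_len P)%N ->
  run_en P w0 d j = aeval (enF j) (mkx w0 w1 d).
Proof.
elim: j => [|j IH] Hj; first by rewrite /aeval eval_e /NN rmorph0 addr0.
rewrite [run_en _ _ _ _]/= IH; last exact: ltnW.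
rewrite /aeval [enF _]/= eval_add eval_scale eval_e lt_NN //.
rewrite rmorphD [mkx _ _ _ _]/=.
ring.
Qed.

Definition le_c (a : form * rat) (q : rat) : cns := (a.1, q - a.2).
Definition ge_c (a : form * rat) (q : rat) : cns := (fscale (-1) a.1, a.2 - q).

Lemma holds_le a q (x : nat -> R) : holds NN (le_c a q) x = (aeval a x <= ratr q).
Proof. rewrite /holds /aeval /le_c; cbn [fst snd]; by rewrite rmorphB lerBrDr. Qed.

Lemma holds_ge a q (x : nat -> R) : holds NN (ge_c a q) x = (ratr q <= aeval a x).
Proof. rewrite /holds /aeval /ge_c; cbn [fst snd]. rewrite eval_scale rmorphN1 mulN1r rmorphB lerNl opprB lerBlDr. done. Qed.

Definition atomC (A : 'I_m -> form * rat) (a : atom m) : seq cns :=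
  match at_op a with
  | CLe => [:: le_c (A (at_clock a)) (at_const a)]
  | CGe => [:: ge_c (A (at_clock a)) (at_const a)]
  | CEq => [:: le_c (A (at_clock a)) (at_const a); ge_c (A (at_clock a)) (at_const a)]
  end.

Definition genA (A : 'I_m -> form * rat) (g : constr m) := flatten (map (atomC A) g).

Lemma genA_ok (v : valuation R m) A g x : (forall c, v c = aeval (A c) x) ->
  sat v g = allh NN (genA A g) x.
Proof.
move=> Hv; rewrite /sat /genA; elim: g => [|a g IH] //=; rewrite allh_cat -IH; congr andb.
case: a => c op q; case: op; rewrite /allh /sat_atom /= ?holds_le ?holds_ge -Hv ?andbT //.
by rewrite eq_le.
Qed.

Definition inEC (a : form * rat) : seq cns := [:: ge_c a lo; le_c a hi].

Lemma inEC_ok a (x : nat -> R) : allh NN (inEC a) x = Defs.inE lo hi (aeval a x).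
Proof. by rewrite /allh /= holds_ge holds_le andbT. Qed.

Definition stepC j : seq cns :=
  [:: ge_c (e j.+2, 0) 0] ++
  genA (fun c => (valF j c, 0)) (etp_inv P j) ++
  genA (fun c => (fadd (valF j c) (e j.+2), 0)) (etp_inv P j) ++
  genA (fun c => (fadd (valF j c) (e j.+2), 0)) (etp_guard P j) ++
  inEC (enF j) ++
  inEC (fadd (enF j).1 (fscale (etp_rate P j) (e j.+2)), (enF j).2).

Definition dif := (fadd (enF (etp_len P)).1 (fscale (-1) (e 1)), (enF (etp_len P)).2).

Definition finalC : seq cns :=
  inEC (enF (etp_len P)) ++
  flatten (map (fun c => [:: le_c (valF (etp_len P) c, 0) 0; ge_c (valF (etp_len P) c, 0) 0])
      (enum 'I_m)) ++
  [:: le_c dif 0; ge_c dif 0].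

Definition allC := flatten (map stepC (iota 0 (etp_len P))) ++ finalC.

Lemma allh_flatten (T : Type) N (f : T -> seq cns) s (x : nat -> R) :
  allh N (flatten (map f s)) x = all (fun j => allh N (f j) x) s.
Proof. by elim: s => //= a s IH; rewrite allh_cat IH. Qed.

Lemma run_ok_iff w0 w1 d :
  run_ok P lo hi d w0 w1 <-> allh NN allC (mkx w0 w1 d).
Proof.
set x := mkx w0 w1 d.
have Hv : forall j, (j <= etp_len P)%N -> forall c,
    run_val P d j c = aeval (valF j c, 0) x.
  by move=> j Hj c; rewrite /aeval /= rmorph0 addr0 (valF_ok w0 w1).
have step : forall j, (j < etp_len P)%N ->
  (0 <= d j /\
   sat (run_val P d j) (etp_inv P j) /\
   sat (delay (run_val P d j) (d j)) (etp_inv P j) /\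
   sat (delay (run_val P d j) (d j)) (etp_guard P j) /\
   Defs.inE lo hi (run_en P w0 d j) /\
   Defs.inE lo hi (run_en P w0 d j + d j * ratr (etp_rate P j)))
  <-> allh NN (stepC j) x.
  move=> j Hj.
  have Hd : forall c, delay (run_val P d j) (d j) c =
      aeval (fadd (valF j c) (e j.+2), 0) x.
    move=> c; rewrite /delay /aeval /= eval_add eval_e lt_NN // rmorph0 addr0.
    by rewrite (valF_ok w0 w1) // ltnW.
  have E1 : allh NN [:: ge_c (e j.+2, 0) 0] x = (0 <= d j).
    by rewrite /allh /= andbT holds_ge /aeval /= eval_e lt_NN // rmorph0 addr0.
  have E2 : allh NN (genA (fun c => (valF j c, 0)) (etp_inv P j)) x =
            sat (run_val P d j) (etp_inv P j).
    by rewrite -(genA_ok (v := run_val P d j)) // => c; rewrite Hv // ltnW.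
  have E3 : allh NN (genA (fun c => (fadd (valF j c) (e j.+2), 0)) (etp_inv P j)) x =
            sat (delay (run_val P d j) (d j)) (etp_inv P j).
    by rewrite -(genA_ok (v := delay (run_val P d j) (d j))).
  have E4 : allh NN (genA (fun c => (fadd (valF j c) (e j.+2), 0)) (etp_guard P j)) x =
            sat (delay (run_val P d j) (d j)) (etp_guard P j).
    by rewrite -(genA_ok (v := delay (run_val P d j) (d j))).
  have E5 : allh NN (inEC (enF j)) x = Defs.inE lo hi (run_en P w0 d j).
    by rewrite inEC_ok (enF_ok w0 w1) // ltnW.
  have E6 : allh NN (inEC (fadd (enF j).1 (fscale (etp_rate P j) (e j.+2)), (enF j).2)) x
         = Defs.inE lo hi (run_en P w0 d j + d j * ratr (etp_rate P j)).
    rewrite inEC_ok (enF_ok w0 w1); last exact: ltnW.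
    rewrite /aeval; cbn [fst snd]; rewrite eval_add eval_scale eval_e lt_NN //.
    by congr (Defs.inE _ _ _); rewrite addrAC mulrC.
  rewrite /stepC !allh_cat E1 E2 E3 E4 E5 E6.
  split => [[h1 [h2 [h3 [h4 [h5 h6]]]]]|/andP[h1 /andP[h2 /andP[h3 /andP[h4 /andP[h5 h6]]]]]].
  + by rewrite h1 h2 h3 h4 h5 h6.
  + by do !split.
have Ed : aeval dif x = run_en P w0 d (etp_len P) - w1.
  rewrite (enF_ok w0 w1) // /aeval /dif /= eval_add eval_scale eval_e /NN /= rmorphN1.
  ring.
have Ec : forall c, allh NN [:: le_c (valF (etp_len P) c, 0) 0; ge_c (valF (etp_len P) c, 0) 0] x
          = (run_val P d (etp_len P) c == 0).
  by move=> c; rewrite /allh /= holds_le holds_ge -Hv // rmorph0 andbT eq_le.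
rewrite /run_ok /allC allh_cat allh_flatten /finalC !allh_cat inEC_ok allh_flatten.
rewrite -(enF_ok w0 w1) //.
have -> : allh NN [:: le_c dif 0; ge_c dif 0] x = (run_en P w0 d (etp_len P) == w1).
  by rewrite /allh /= holds_le holds_ge Ed rmorph0 andbT subr_le0 subr_ge0 -eq_le.
split.
- move=> [Hs [Hfin [Hclk Hw1]]]; apply/andP; split.
  + apply/allP => j; rewrite mem_iota add0n => /andP[_ Hj]; apply/step => //; exact: Hs.
  + rewrite Hfin Hw1 eqxx andbT /=; apply/allP => c _; move: (Ec c); rewrite /allh /= => ->; by rewrite Hclk.
- move=> /andP[/allP Hs /and3P[Hfin /allP Hclk /eqP Hw1]]; split; last split => //.
  + move=> j Hj; apply/step => //; apply: Hs; by rewrite mem_iota add0n.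
  + split => // c; apply/eqP; rewrite -Ec; apply: Hclk; by rewrite mem_enum.
Qed.

Lemma energy_iff w0 w1 : @energy_rel R m P lo hi w0 w1 <->
  exists y, (forall i, (i < 2)%N -> y i = mkx w0 w1 (fun _ => 0) i) /\ allh NN allC y.
Proof.
split.
- move=> [d Hd]; exists (mkx w0 w1 d); split; first by case=> [|[|]].
  exact/run_ok_iff.
- move=> [y [Hy HC]]; exists (fun j => y j.+2); apply/run_ok_iff.
  rewrite (@allh_ext _ _ _ _ y) // => -[|[|i]] _ //=.
  + by rewrite Hy.
  + by rewrite Hy.
Qed.

Lemma energy_poly : poly2 (@energy_rel R m P lo hi).
Proof.
have [C' HC'] := @elim_tail R NN 2 allC isT.
exists (map (fun k : cns => (k.1 0, k.1 1, k.2)) C') => w0 w1.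
by rewrite energy_iff HC' (@readoff2 R NN C' (mkx w0 w1 (fun _ => 0))) // => -[|[|i]].
Qed.

Lemma energy_sub w0 w1 : @energy_rel R m P lo hi w0 w1 ->
  Defs.inE lo hi w0 /\ Defs.inE lo hi w1.
Proof.
move=> [d [Hs [Hfin [Hclk Hw1]]]]; split; last by rewrite -Hw1.
move: Hs Hfin; case: (etp_len P) => [|n] Hs Hfin //.
by have [_ [_ [_ [_ [h _]]]]] := Hs 0%N isT.
Qed.

End Energy.

Lemma comp_in (R : realFieldType) lo hi ps (w1 w2 : R) :
  Defs.inE lo hi w1 -> comp_rel lo hi ps w1 w2 -> Defs.inE lo hi w2.
Proof.
elim: ps w1 => [|[m P] ps IH] w1 /=; first by move=> h <-.
move=> _ [w [Hr Hc]]; have [_ h] := energy_sub Hr; exact: IH h Hc.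
Qed.

Lemma comp_poly (R : realFieldType) lo hi ps : poly2 (@comp_rel R lo hi ps).
Proof.
elim: ps => [|[m P] ps IH] /=.
- exists [:: (1, -1, 0); (-1, 1, 0)] => w0 w1 /=.
  rewrite rmorph1 rmorphN1 rmorph0 andbT !mul1r !mulN1r.
  split => [->|/andP[h1 h2]]; first by apply/andP; split; lra.
  apply/eqP; rewrite eq_le; apply/andP; split; lra.
- apply: poly2_comp => //; exact: energy_poly.
Qed.

Unset Implicit Arguments.

Theorem mainTheorem2 (R : realFieldType) (lo hi : rat) :
  (forall (m : nat) (P : etp m),
      energy_rel_props lo hi (@energy_rel R m P lo hi)) /\
  (forall ps : seq {m : nat & etp m}, ps <> [::] ->
      energy_rel_props lo hi (@comp_rel R lo hi ps)).
Proof.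
split.
- move=> m P; apply: props_of; [exact: energy_sub | exact: energy_poly].
- move=> ps Hps; apply: props_of; last exact: comp_poly.
  case: ps Hps => [//|[m P] ps] _ w0 w2 /= [w1 [Hr Hc]].
  have [h0 h1] := energy_sub Hr; split => //; exact: comp_in h1 Hc.
Qed.
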